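(* Let $k\ge 1$ and let $\mathcal{M}=\{q_1,\dots,q_k\}$ be a finite set of odd primes. Then there exists $n_{\mathcal{M}}\in\mathbb{N}$ such that for every integer $N\ge n_{\mathcal{M}}$ there exists a sequence of $N$ consecutive integers $a, a+1,\dots,a+N-1$ such that no member of the sequence is relatively prime to the product of all the other members. Moreover, for each member $x$ of the sequence, the greatest common divisor of $x$ and the product of all the other members is divisible by some prime $p$ with $p\notin\mathcal{M}$. *)

(* Defs.v *)
From mathcomp Require Import all_boot all_order all_algebra.
Set Implicit Arguments. Unset Strict Implicit. Unset Printing Implicit Defensive.
Import Order.TTheory GRing.Theory Num.Theory.
Local Open Scope ring_scope.

Definition prod_others (a : int) (N i : nat) : int :=
  \prod_(j < N | (j : nat) != i) (a + j%:Z).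

(* Main.v *)
Require Import Defs.
From mathcomp Require Import all_boot all_order all_algebra.
From mathcomp Require Import zify.
Import Order.TTheory GRing.Theory Num.Theory.
Set Implicit Arguments. Unset Strict Implicit. Unset Printing Implicit Defensive.


Lemma bin_le_pow n i : 0 < n -> 'C(n, i) <= 2 ^ n.-1.
Proof.
elim: n i => [//|n IH] [|i] _; first by rewrite bin0 expn_gt0.
case: n IH => [|n] IH; first by case: i.
rewrite binS /= expnS mul2n -addnn; apply: leq_add; exact: IH.
Qed.

Lemma bin_mono n m : m < n -> m.+1 <= n.*2 - m -> 'C(n.*2, m) <= 'C(n.*2, m.+1).
Proof.
move=> hm hle.
have := mul_bin_left n.*2 m.
move=> e; have : m.+1 * 'C(n.*2, m) <= m.+1 * 'C(n.*2, m.+1).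
  by rewrite e leq_mul2r hle orbT.
by rewrite leq_mul2l.
Qed.

Lemma bin_le_mid n m : 'C(n.*2, m) <= 'C(n.*2, n).
Proof.
suff H : forall d, d <= n -> 'C(n.*2, n - d) <= 'C(n.*2, n).
  case: (leqP m n) => hmn.
    by have := H (n - m) (leq_subr _ _); rewrite subKn.
  case: (leqP m n.*2) => hm2; last by rewrite bin_small.
  rewrite -bin_sub //; have := H (m - n) _; rewrite -addnn.
  have -> : n - (m - n) = n + n - m by lia.
  apply; lia.
elim=> [|d IH] hd; first by rewrite subn0.
apply: leq_trans (IH (ltnW hd)).
have -> : n - d = (n - d.+1).+1 by lia.
apply: bin_mono; lia.
Qed.

Lemma central_lb n : 4 ^ n <= n.*2.+1 * 'C(n.*2, n).
Proof.
have : 2 ^ n.*2 = \sum_(i < n.*2.+1) 'C(n.*2, i).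
  rewrite -{1}[2]/(1 + 1) expnDn; apply: eq_bigr => i _.
  by rewrite !exp1n !muln1.
have -> : 4 ^ n = 2 ^ n.*2 by rewrite -mul2n expnM.
move=> ->; apply: (@leq_trans (\sum_(i < n.*2.+1) 'C(n.*2, n))).
  by apply: leq_sum => i _; apply: bin_le_mid.
by rewrite sum_nat_const card_ord.
Qed.


Lemma prime_ndvd_fact p j : prime p -> j < p -> ~~ (p %| j`!).
Proof.
move=> pp hj; apply/negP => hd.
have : 0 < logn p j`! by rewrite logn_gt0 mem_primes pp fact_gt0.
rewrite logn_fact // big1_seq // => k /andP[_]; rewrite mem_index_iota => /andP[hk _].
apply: divn_small; apply: (leq_trans hj); rewrite -{1}(expn1 p) leq_exp2l //.
exact: prime_gt1.
Qed.

Lemma mid_primes_le j :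
  \prod_(j.+2 <= p < j.*2.+2 | prime p) p <= 'C(j.*2.+1, j.+1).
Proof.
set X := \prod_(_ <= p < _ | _) p.
set Y := \prod_(j.+2 <= k < j.*2.+2) k.
have hle : j.+1 <= j.*2.+1 by lia.
have hY : 'C(j.*2.+1, j.+1) * j`! = Y.
  have h1 := bin_fact hle.
  have h2 := fact_split hle.
  have e : j.*2.+1 - j.+1 = j by lia.
  rewrite e in h1.
  apply/eqP; rewrite -(eqn_pmul2l (fact_gt0 j.+1)).
  by rewrite /Y -h2 -h1 mulnCA.
have hXY : X %| Y.
  rewrite /X /Y [X in _ %| X](bigID prime) /=; apply: dvdn_mulr.
  exact: dvdnn.
have hcop : coprime X j`!.
  rewrite /X big_nat_cond.
  apply: (big_ind (fun x => coprime x j`!)); first exact: coprime1n.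
    by move=> x y hx hy; rewrite coprimeMl hx hy.
  move=> i /andP[/andP[hi _] pi]; rewrite prime_coprime //.
  apply: prime_ndvd_fact => //; lia.
rewrite -hY Gauss_dvdl // in hXY.
apply: dvdn_leq => //; rewrite bin_gt0; lia.
Qed.

Lemma bin_mid_le j : 'C(j.*2.+1, j.+1) <= 4 ^ j.
Proof.
have h := @bin_le_pow (j.*2.+2) (j.+1) isT.
rewrite binS in h.
have e : 'C(j.*2.+1, j) = 'C(j.*2.+1, j.+1).
  have hh : j.+1 <= j.*2.+1 by lia.
  have := @bin_sub (j.*2.+1) (j.+1) hh.
  by have -> : j.*2.+1 - j.+1 = j by lia.
rewrite e addnn /= -mul2n in h.
have -> : 4 ^ j = 2 ^ j.*2 by rewrite -mul2n expnM.
by rewrite -(leq_pmul2l (isT : 0 < 2)) -expnS.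
Qed.

Lemma primorial_aux m : \prod_(0 <= p < m.+1) (if prime p then p else 1) <= 4 ^ m.
Proof.
elim/ltn_ind: m => m IH.
case: m IH => [|[|[|m]]] IH; try by rewrite unlock.
case/boolP: (odd m) => hm.
- rewrite big_nat_recr //= ifF; last first.
    apply/negP => pr; have := prime_oddPn pr; rewrite /= hm /=.
    by move=> /(_ isT).
  rewrite muln1; apply: leq_trans (IH m.+2 (ltnSn _)) _.
  by rewrite leq_exp2l.
- have ej : m.+3 = (m./2.+1).*2.+1.
    by rewrite -[in LHS](odd_double_half m) (negbTE hm) add0n; lia.
  set j := m./2.+1 in ej *.
  rewrite ej (@big_cat_nat _ _ _ j.+2) //=; last by lia.
  have h1 : \prod_(0 <= i < j.+2) (if prime i then i else 1) <= 4 ^ j.+1.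
    by apply: IH; lia.
  have h2 : \prod_(j.+2 <= i < j.*2.+2) (if prime i then i else 1) <= 4 ^ j.
    rewrite -big_mkcond; exact: leq_trans (mid_primes_le j) (bin_mid_le j).
  apply: leq_trans (leq_mul h1 h2) _.
  by rewrite -expnD; have -> : j.+1 + j = j.*2.+1 by lia.
Qed.

Lemma primorial m : \prod_(0 <= p < m.+1 | prime p) p <= 4 ^ m.
Proof. by rewrite big_mkcond; exact: primorial_aux. Qed.


Lemma legendre_bin p n : prime p ->
  logn p 'C(n.*2, n) + 2 * \sum_(1 <= k < n.*2.+1) n %/ p ^ k
  = \sum_(1 <= k < n.*2.+1) n.*2 %/ p ^ k.
Proof.
move=> pp.
have hle : n <= n.*2 by lia.
have hf := bin_fact hle.
rewrite (_ : n.*2 - n = n) in hf; last by lia.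
have e : logn p (n.*2)`! = logn p 'C(n.*2, n) + (logn p n`! + logn p n`!).
  by rewrite -hf !lognM // ?muln_gt0 ?fact_gt0 ?bin_gt0.
have ext : \sum_(1 <= k < n.+1) n %/ p ^ k = \sum_(1 <= k < n.*2.+1) n %/ p ^ k.
  rewrite [RHS](@big_cat_nat _ _ _ n.+1) //=; try lia.
  rewrite [X in _ = _ + X]big1_seq ?addn0 // => k /andP[_].
  rewrite mem_index_iota => /andP[hk _]; apply: divn_small.
  apply: (leq_trans hk); apply: ltnW; apply: ltn_expl; exact: prime_gt1.
rewrite !logn_fact // ext in e.
rewrite e; lia.
Qed.

Lemma binom_pow_le p n : prime p -> 0 < n -> p ^ logn p 'C(n.*2, n) <= n.*2.
Proof.
move=> pp n0; have p1 := prime_gt1 pp.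
set T := trunc_log p n.*2.
have hT : p ^ T <= n.*2 by apply: trunc_logP => //; lia.
have hT2 : n.*2 < p ^ T.+1 by apply: trunc_log_ltn.
suff : logn p 'C(n.*2, n) <= T.
  by move=> h; apply: leq_trans hT; rewrite leq_exp2l.
have hTn : T.+1 <= n.*2.+1.
  have := ltn_expl T p1; lia.
have e := legendre_bin n pp.
rewrite (@big_cat_nat _ _ _ T.+1) //= in e.
rewrite [X in _ = X](@big_cat_nat _ _ _ T.+1) //= in e.
have z2 : \sum_(T.+1 <= i < n.*2.+1) n.*2 %/ p ^ i = 0.
  apply: big1_seq => k /andP[_]; rewrite mem_index_iota => /andP[hk _].
  apply: divn_small; apply: (leq_trans hT2); rewrite leq_exp2l //.
have z1 : \sum_(T.+1 <= i < n.*2.+1) n %/ p ^ i = 0.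
  apply: big1_seq => k /andP[_]; rewrite mem_index_iota => /andP[hk _].
  apply: divn_small; apply: leq_trans (leq_trans hT2 _); first lia.
  rewrite leq_exp2l //.
rewrite z1 z2 !addn0 in e.
have hs : \sum_(1 <= k < T.+1) n.*2 %/ p ^ k <=
          \sum_(1 <= k < T.+1) (2 * (n %/ p ^ k) + 1).
  apply: leq_sum => k _.
  have pk : 0 < p ^ k by rewrite expn_gt0; lia.
  rewrite -ltnS ltn_divLR //.
  have := divn_eq n (p ^ k); have := ltn_pmod n pk; nia.
rewrite big_split /= sum_nat_const_nat -big_distrr /= in hs.
lia.
Qed.

Lemma binom_mid_zero p n : prime p -> p <= n -> n.*2 < 3 * p -> n.*2 < p * p ->
  logn p 'C(n.*2, n) = 0.
Proof.
move=> pp hpn h3 hsq; have p1 := prime_gt1 pp.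
have e := legendre_bin n pp.
suff : \sum_(1 <= k < n.*2.+1) n.*2 %/ p ^ k = 2 * \sum_(1 <= k < n.*2.+1) n %/ p ^ k.
  lia.
rewrite big_distrr /=; apply: eq_big_nat => k /andP[hk1 hk2].
case: k hk1 hk2 => [//|[|k]] _ _.
- rewrite expn1.
  have -> : n.*2 %/ p = 2.
    apply/eqP; rewrite eqn_leq -ltnS ltn_divLR ?leq_divRL; lia.
  have -> : n %/ p = 1.
    apply/eqP; rewrite eqn_leq -ltnS ltn_divLR ?leq_divRL; lia.
  by [].
- have hp : p * p <= p ^ k.+2.
    rewrite !expnS; apply: leq_mul => //; apply: leq_pmulr; rewrite expn_gt0; lia.
  rewrite !divn_small //; lia.
Qed.


Lemma prod_const_count m (P : pred nat) c :
  \prod_(0 <= p < m | P p) c = c ^ count P (iota 0 m).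
Proof. by rewrite big_const_seq iter_muln_1 /index_iota subn0. Qed.

Lemma erdos n : 0 < n ->
  4 ^ n <= n.*2.+1 * ((n.*2) ^ count (fun p => prime p && (p * p <= n.*2)) (iota 0 n.*2.+1)
     * (4 ^ (n.*2 %/ 3) * (n.*2) ^ count (fun p => prime p && (n < p)) (iota 0 n.*2.+1))).
Proof.
move=> n0.
apply: leq_trans (central_lb n) _; rewrite leq_mul2l; apply/orP; right.
set C := 'C(n.*2, n).
have C0 : 0 < C by rewrite bin_gt0; lia.
have eC : C = \prod_(0 <= p < n.*2.+1) p ^ logn p C.
  rewrite -{1}(partnT C0) (widen_partn _ (leq_addr n.*2 C)).
  rewrite (@big_cat_nat _ _ _ n.*2.+1) //=; last by lia.
  rewrite [X in _ * X = _]big1_seq ?muln1; last first.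
    move=> p /andP[_ hp]; case/boolP: (prime p) => pp.
      have := binom_pow_le pp n0; rewrite -/C.
      case: (logn p C) => [//|v] h; exfalso.
      have : p <= p ^ v.+1 by rewrite -{1}(expn1 p) leq_exp2l ?prime_gt1.
      move: hp; rewrite mem_index_iota; lia.
    by rewrite lognE (negbTE pp).
  by apply: eq_bigl => p.
rewrite [X in X <= _]eC.
set h1 := fun p => if prime p && (p * p <= n.*2) then n.*2 else 1.
set h2 := fun p => if prime p && (3 * p <= n.*2) then p else 1.
set h3 := fun p => if prime p && (n < p) then n.*2 else 1.
apply: (@leq_trans (\prod_(0 <= p < n.*2.+1) (h1 p * (h2 p * h3 p)))).
  rewrite big_seq_cond [X in _ <= X]big_seq_cond; apply: leq_prod => p /andP[hp _].
  rewrite mem_index_iota in hp.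
  rewrite /h1 /h2 /h3.
  case/boolP: (prime p) => pp /=; last by rewrite lognE (negbTE pp).
  have hb := binom_pow_le pp n0; rewrite -/C in hb.
  have p1 := prime_gt1 pp.
  case: (leqP (p * p) n.*2) => hsq /=.
    apply: leq_trans hb _; apply: leq_pmulr; rewrite muln_gt0.
    by case: ifP; case: ifP => _ _ /=; lia.
  have hv : logn p C <= 1.
    case: (leqP (logn p C) 1) => // h; exfalso.
    have : p ^ 2 <= p ^ logn p C by rewrite leq_exp2l.
    rewrite (expnS p 1) expn1; lia.
  case: (leqP (3 * p) n.*2) => h3p /=.
    rewrite mul1n; apply: leq_trans (_ : p <= _).
      by apply: leq_trans (leq_pexp2l (ltnW p1) hv) _; rewrite expn1.
    by apply: leq_pmulr; case: ifP => _; lia.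
  case: (leqP p n) => hpn /=.
    by rewrite (binom_mid_zero pp hpn) //; lia.
  rewrite !mul1n; apply: leq_trans (leq_pexp2l (ltnW p1) hv) _; rewrite expn1; lia.
rewrite big_split big_split /=.
apply: leq_mul.
  by rewrite /h1 -big_mkcond prod_const_count.
apply: leq_mul; last by rewrite /h3 -big_mkcond prod_const_count.
rewrite /h2 -big_mkcond /=.
apply: leq_trans (primorial (n.*2 %/ 3)).
rewrite (@big_nat_widen _ _ _ 0 (n.*2 %/ 3).+1 n.*2.+1); last by lia.
apply: eq_leq; apply: eq_bigl => p.
rewrite ltnS leq_divRL //.
by rewrite mulnC.
Qed.


Lemma double_le_pow u : 0 < u -> u.*2 <= 2 ^ u.
Proof.
elim: u => [//|[|u] IH _ //].
rewrite expnS; have := IH isT; lia.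
Qed.

Lemma poly_exp d c : exists K0, forall K, K0 <= K -> c * K ^ d < 2 ^ K.
Proof.
elim: d c => [|d IH] c.
  exists c => K hK; rewrite expn0 muln1.
  apply: leq_trans (ltn_expl c (isT : 1 < 2)) _; by rewrite leq_exp2l.
have [M0 hM0] := IH (c * 3 ^ d).
exists (M0.+1).*2 => K hK.
set m := K./2; set u := K - m.
have hm : M0 < m by rewrite /m; lia.
have hKm : K <= 3 * m by rewrite /m; lia.
have hKu : K <= u.*2 by rewrite /u /m; lia.
have hu : 0 < u by rewrite /u /m; lia.
have eK : 2 ^ K = 2 ^ u * 2 ^ m by rewrite -expnD /u /m; congr (2 ^ _); lia.
have h1 : c * K ^ d <= c * 3 ^ d * m ^ d.
  rewrite -mulnA -expnMn leq_mul2l; apply/orP; right.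
  case: d {IH hM0} => [//|d]; by rewrite leq_exp2r.
have h2 := hM0 m (ltnW hm).
have h3 : K <= 2 ^ u := leq_trans hKu (double_le_pow hu).
rewrite expnS mulnCA eK.
apply: leq_ltn_trans (leq_mul h3 h1) _.
by rewrite ltn_mul2l expn_gt0 /=.
Qed.


Lemma count_sq_le m c : m < c * c ->
  count (fun p => prime p && (p * p <= m)) (iota 0 m.+1) <= c.
Proof.
move=> hm.
apply: leq_trans (@sub_count _ _ (fun p => p < c) _ _) _.
  move=> p /andP[_ h] /=; rewrite ltnNge; apply/negP => hc.
  have := leq_mul hc hc; lia.
rewrite -size_filter -{2}(size_iota 0 c); apply: uniq_leq_size.
  by apply: filter_uniq; exact: iota_uniq.
by move=> p; rewrite mem_filter mem_iota => /andP[h _]; rewrite mem_iota.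
Qed.

Lemma leq_exp_base a b e : a <= b -> a ^ e <= b ^ e.
Proof. by case: e => [//|e] h; rewrite leq_exp2r. Qed.

Lemma count_upper n :
  count prime (iota n.+1 n) = count (fun p => prime p && (n < p)) (iota 0 n.*2.+1).
Proof.
have -> : n.*2.+1 = n.+1 + n by lia.
rewrite iotaD count_cat add0n.
have -> : count (fun p => prime p && (n < p)) (iota 0 n.+1) = 0.
  apply/eqP; rewrite -leqn0 leqNgt -has_count; apply/hasP => -[p].
  by rewrite mem_iota => /andP[_ h] /andP[_ h2]; lia.
rewrite add0n; apply: eq_in_count => p; rewrite mem_iota => /andP[h _].
by rewrite h andbT.
Qed.

Lemma many_primes k : exists N0, forall N, N0 <= N ->
  2 + 2 * (trunc_log 2 N).+1 ^ k.+1 <= count prime (iota (N %/ 4).+1 (N %/ 4)).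
Proof.
have [A hA] := poly_exp 1 96.
have [B hB] := poly_exp 1 108.
have [Cc hC] := poly_exp k.+2 72.
exists (2 ^ (A + B.*2 + Cc + 8)) => N hN.
set l := trunc_log 2 N.
have hl : A + B.*2 + Cc + 8 <= l by apply: trunc_log_max.
have hlN : 2 ^ l <= N by apply: trunc_logP => //; apply: leq_trans hN; rewrite expn_gt0.
set K := l.+1.
set n := N %/ 4.
have hNK : N < 2 ^ K by apply: trunc_log_ltn.
have h256 : 2 ^ 8 <= 2 ^ l by rewrite leq_exp2l //; lia.
have n1 : 0 < n by rewrite /n; lia.
rewrite count_upper.
set cnt := count _ _.
rewrite leqNgt; apply/negP => hcnt.
have he := erdos n1.
set s := count _ _ in he.
rewrite -/cnt in he.
set h := K.+1./2.
have h2n : n.*2.+1 <= 2 ^ K by rewrite /n; lia.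
have hs : s <= 2 ^ h.
  apply: count_sq_le; rewrite -expnD.
  apply: leq_trans (leq_trans _ hNK) _; first by rewrite /n; lia.
  by rewrite leq_exp2l //; rewrite /h; lia.
have hb : 4 ^ n <= 2 ^ (K + K * s + (n.*2 %/ 3).*2 + K * cnt).
  apply: leq_trans he _.
  have -> : 2 ^ (K + K * s + (n.*2 %/ 3).*2 + K * cnt) =
     2 ^ K * ((2 ^ K) ^ s * (4 ^ (n.*2 %/ 3) * (2 ^ K) ^ cnt)).
    by rewrite -!expnM (_ : 4 = 2 ^ 2) // -expnM -!expnD; congr (2 ^ _); lia.
  apply: leq_mul; first exact: h2n.
  apply: leq_mul; first by apply: leq_exp_base; lia.
  apply: leq_mul => //; apply: leq_exp_base; lia.
rewrite (_ : 4 ^ n = 2 ^ n.*2) in hb; last by rewrite -mul2n expnM.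
rewrite leq_exp2l // in hb.
set P1 := K * s in hb; set P2 := K * cnt in hb.
have hP1 : P1 <= K * 2 ^ h by rewrite leq_mul2l hs orbT.
have hP2 : P2 <= K + K * (2 * K ^ k.+1).
  apply: leq_trans (leq_mul (leqnn K) (_ : cnt <= 1 + 2 * K ^ k.+1)) _; first lia.
  by rewrite mulnDr muln1.
set m := K./2.
have eK : 2 ^ K = 2 ^ h * 2 ^ m by rewrite -expnD /h /m; congr (2 ^ _); lia.
have hm : 36 * K < 2 ^ m.
  have := hB m (ltac:(rewrite /m /K; lia)); rewrite expn1 /m; lia.
have hKy : 3 * (12 * (K * 2 ^ h)) < 2 ^ K.
  rewrite eK (_ : 3 * (12 * (K * 2 ^ h)) = 2 ^ h * (36 * K)); last by nia.
  by rewrite ltn_pmul2l ?expn_gt0.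
have hKa : 96 * K < 2 ^ K by have := hA K (ltac:(rewrite /K; lia)); rewrite expn1.
have hKc : 72 * K ^ k.+2 < 2 ^ K by apply: hC; rewrite /K; lia.
have ek : K * (2 * K ^ k.+1) = 2 * K ^ k.+2 by rewrite mulnCA -expnS.
rewrite ek in hP2.
have h2K : 2 ^ K = 2 * 2 ^ l by rewrite expnS.
set X1 := K * 2 ^ h in hP1 hKy; set X2 := K ^ k.+2 in hP2 hKc.
set Y := 2 ^ K in hKy hKa hKc h2K eK hNK.
lia.
Qed.


Fixpoint smooth_list (M : seq nat) (K : nat) : seq nat :=
  if M is q :: M' then [seq q ^ e * t | e <- iota 0 K, t <- smooth_list M' K]
  else [:: 1].

Lemma size_smooth M K : size (smooth_list M K) = K ^ size M.
Proof. by elim: M => //= q M IH; rewrite size_allpairs size_iota IH expnS. Qed.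

Lemma smooth_mem M K s : uniq M -> all prime M -> 0 < s -> s < 2 ^ K ->
  (forall q, prime q -> q %| s -> q \in M) -> s \in smooth_list M K.
Proof.
elim: M s => [|q M IH] s /= hu hp s0 sK hM.
  case: (ltngtP s 1) => [|h1|->]; [lia| |by rewrite inE].
  by have := hM _ (pdiv_prime h1) (pdiv_dvd s).
case/andP: hu => qM hu; case/andP: hp => pq hp.
have [m cop es] := pfactor_coprime pq s0.
set e := logn q s in es.
have m0 : 0 < m by move: s0; rewrite es muln_gt0 => /andP[].
have hms : m <= s by rewrite es; apply: leq_pmulr; rewrite expn_gt0 prime_gt0.
have heK : e < K.
  have h1 : q ^ e <= s by rewrite es; apply: leq_pmull.
  have h2 : 2 ^ K <= q ^ K by apply: leq_exp_base; exact: prime_gt1.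
  by rewrite -(ltn_exp2l _ _ (prime_gt1 pq)); lia.
rewrite es mulnC; apply: allpairs_f; first by rewrite mem_iota.
apply: IH => //; first by lia.
move=> r pr hr.
have hrs : r %| s by rewrite es; exact: dvdn_mulr.
have := hM r pr hrs.
rewrite inE => /orP[/eqP er|//].
by move: cop; rewrite prime_coprime // -er hr.
Qed.

Lemma crt (L : seq (nat * nat)) : uniq (unzip1 L) -> all prime (unzip1 L) ->
  exists c, forall q, q \in L -> c %% q.1 = q.2 %% q.1.
Proof.
elim: L => [|[p r] L IH] /= hu hp; first by exists 0.
case/andP: hu => hpL hu; case/andP: hp => pp hp.
have [c hc] := IH hu hp.
have uL : uniq L := map_uniq hu.
set Mo := \prod_(q <- L) q.1.
have cop : coprime p Mo.
  rewrite /Mo big_seq; apply: (big_ind (fun x => coprime p x)).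
  - exact: coprimen1.
  - by move=> x y hx hy; rewrite coprimeMr hx hy.
  move=> q hq; rewrite prime_coprime // dvdn_prime2 //.
    apply/negP => /eqP e; move: hpL; rewrite e; by rewrite (map_f fst hq).
  by move/allP: hp; apply; exact: map_f.
exists (chinese p Mo r c) => q; rewrite inE => /orP[/eqP -> /= | hq].
  exact: chinese_modl.
have dq : q.1 %| Mo by rewrite /Mo (bigD1_seq q) //=; exact: dvdn_mulr.
by rewrite -(modn_dvdm _ dq) chinese_modr // modn_dvdm // hc.
Qed.

Lemma mod_dvd c t p : 0 < p -> c %% p = (p - t %% p) %% p -> p %| c + t.
Proof.
move=> p0 h; rewrite /dvdn -modnDml h modnDml -modnDmr subnK ?modnn //.
exact: ltnW (ltn_pmod _ _).
Qed.


Definition Wd N := N.-1./2.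
Definition Rd N := N.-1 - Wd N.
Definition dist W i := if W <= i then i - W else W - i.
Definition C0 (M : seq nat) N :=
  [seq p <- iota 0 N | [&& prime p, odd p, p \notin M & p.*2 <= Rd N]].
Definition isTarget M N i :=
  ~~ odd (dist (Wd N) i) && ~~ has (fun p => p %| dist (Wd N) i) (C0 M N).
Definition Tl M N := [seq i <- iota 0 N | isTarget M N i].

Lemma size_Tl M N : uniq M -> (forall q, q \in M -> prime q /\ odd q) ->
  size (Tl M N) <= 2 + 2 * (trunc_log 2 N).+1 ^ (size M).+1.
Proof.
move=> hu hMp.
have apM : all prime M by apply/allP => q /hMp [].
set K := (trunc_log 2 N).+1.
set W := Wd N.
have hNK : N < 2 ^ K by apply: trunc_log_ltn.
set A := [seq 2 ^ a * t | a <- iota 0 K, t <- smooth_list M K].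
set V := 0 :: A.
set Pos := [seq W + v | v <- V] ++ [seq W - v | v <- V].
have -> : 2 + 2 * K ^ (size M).+1 = size Pos.
  rewrite size_cat !size_map /= size_allpairs size_iota size_smooth expnS; lia.
apply: uniq_leq_size; first by apply: filter_uniq; exact: iota_uniq.
move=> i; rewrite mem_filter mem_iota => /andP[hT /andP[_ hiN]].
move: hT; rewrite /isTarget -/W => /andP[hev hnh].
set d := dist W i in hev hnh.
have hdR : d <= Rd N by rewrite /d /dist /Rd -/W; case: ifP; rewrite /W /Wd; lia.
have hdV : d \in V.
  case: (posnP d) => [->|d0]; first by rewrite inE.
  rewrite inE; apply/orP; right.
  have [m cop ed] := pfactor_coprime (isT : prime 2) d0.
  set a := logn 2 d in ed.
  have m0 : 0 < m by move: d0; rewrite ed muln_gt0 => /andP[].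
  have hdN : d < N by move: hdR; rewrite /Rd /Wd; lia.
  rewrite ed mulnC; apply: allpairs_f.
    rewrite mem_iota /=; rewrite -(ltn_exp2l _ _ (isT : 1 < 2)).
    apply: leq_ltn_trans hNK; apply: leq_trans (ltnW hdN); rewrite ed.
    by apply: leq_pmull.
  apply: smooth_mem => //.
    apply: leq_ltn_trans hNK; apply: leq_trans (ltnW hdN); rewrite ed.
    by apply: leq_pmulr; rewrite expn_gt0.
  move=> r pr hr.
  have r2 : r != 2.
    by apply/eqP => e; move: cop; rewrite prime_coprime // -e hr.
  have ro : odd r.
    by apply/negPn/negP => /(prime_oddPn pr) e; rewrite e in r2.
  have hrd : r %| d by rewrite ed; exact: dvdn_mulr.
  case/boolP: (r \in M) => // rM; exfalso.
  move/negP: hnh; apply; apply/hasP; exists r => //.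
  rewrite mem_filter mem_iota pr ro rM /=.
  have h2d : 2 %| d by rewrite dvdn2.
  have h2r : 2 * r %| d.
    by rewrite Gauss_dvd ?h2d ?hrd // prime_coprime // dvdn_prime2 // eq_sym.
  have := dvdn_leq d0 h2r; have := dvdn_leq d0 hrd; move: hdR hdN; lia.
rewrite mem_cat; apply/orP.
rewrite /d /dist in hdV; case: ifP hdV => hWi hdV.
  by left; apply/mapP; exists (i - W) => //; lia.
by right; apply/mapP; exists (W - i) => //; lia.
Qed.


Unset Implicit Arguments.

Lemma mem_sumn (M : seq nat) q : q \in M -> (q <= sumn M)%N.
Proof.
elim: M => //= a M IH; rewrite inE => /orP[/eqP ->|h]; first exact: leq_addr.
exact: leq_trans (IH h) (leq_addl _ _).
Qed.

Lemma cover_pos (M : seq nat) N c : (8 + 4 * sumn M <= N)%N ->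
  (forall q, q \in M -> prime q /\ odd q) ->
  (size (Tl M N) <= size [seq p <- iota (N %/ 4).+1 (N %/ 4) | prime p])%N ->
  (c %% 2 = (Wd N).+1 %% 2)%N ->
  (forall p, p \in C0 M N -> p %| c + Wd N) ->
  (forall j, j < size (Tl M N) ->
     nth 0 [seq p <- iota (N %/ 4).+1 (N %/ 4) | prime p] j %| c + nth 0 (Tl M N) j)%N ->
  forall i, (i < N)%N -> exists p j, [/\ prime p, p \notin M, (j < N)%N, j != i &
        (p %| c + i)%N /\ (p %| c + j)%N].
Proof.
move=> hN hMp hTF hc2 hcC hcT i hi.
set W := Wd N in hc2 hcC.
have hWR : (W + Rd N + 1 = N)%N by rewrite /Rd /W /Wd; lia.
have h2M : 2 \notin M by apply/negP => /hMp [].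
case/boolP: (odd (dist W i)) => hod.
  have h2 : (2 %| c + i)%N.
    have oc : odd c = odd W.+1.
      by move: hc2; rewrite !modn2; case: (odd c); case: (odd W.+1).
    rewrite dvdn2 oddD oc /=.
    move: hod; rewrite /dist; case: ifP => hWi.
      by rewrite oddB //; case: (odd i); case: (odd W).
    by rewrite oddB; [case: (odd i); case: (odd W) | lia].
  exists 2; exists (if i.+2 < N then i.+2 else i - 2)%N; split => //.
  - by case: (ltnP i.+2 N) => h; lia.
  - by case: (ltnP i.+2 N) => h; apply/eqP; lia.
  - split => //; case: (ltnP i.+2 N) => h.
      rewrite (_ : (c + i.+2 = c + i + 2)%N); last by lia.
      by rewrite dvdn_addl.
    have -> : (c + (i - 2) = (c + i) - 2)%N by lia.
    exact: dvdn_sub.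
case/boolP: (isTarget M N i) => hT.
  set T := Tl M N in hTF hcT *; set F := [seq p <- iota (N %/ 4).+1 (N %/ 4) | prime p] in hTF hcT *.
  have iT : i \in T by rewrite mem_filter mem_iota hT.
  set jj := index i T.
  have hjj : (jj < size T)%N by rewrite index_mem.
  set r := nth 0 F jj.
  have rF : r \in F.
    by apply: mem_nth; exact: leq_trans hjj hTF.
  move: (rF); rewrite mem_filter mem_iota => /andP[pr /andP[hr1 hr2]].
  have hr : (r %| c + i)%N by have := hcT jj hjj; rewrite nth_index.
  exists r; exists (if i + r < N then i + r else i - r)%N; split => //.
  - apply/negP => /mem_sumn; lia.
  - by case: (ltnP (i + r) N) => h; lia.
  - by case: (ltnP (i + r) N) => h; apply/eqP; lia.
  - split => //; case: (ltnP (i + r) N) => h; first by rewrite addnA dvdn_addl ?dvdnn.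
    have -> : (c + (i - r) = (c + i) - r)%N by lia.
    exact: dvdn_sub.
move: hT; rewrite /isTarget -/W hod /= negbK => /hasP [p pC hpd].
move: (pC); rewrite mem_filter mem_iota => /andP[/and4P[pp podd pM p2R] _].
have p0 := prime_gt0 pp.
have hcW := hcC p pC.
have hpi : (p %| c + i)%N.
  move: hpd; rewrite /dist; case: (leqP W i) => hWi hpd.
    rewrite (_ : (c + i = (c + W) + (i - W))%N); last by lia.
    by rewrite dvdn_add.
  have e : (c + W = (c + i) + (W - i))%N by lia.
  by rewrite e dvdn_addl in hcW.
exists p; exists (if W < i then i - p else i + p)%N; split => //.
- case: (ltnP W i) => h; first by lia.
  move: hpd; rewrite /dist; case: (leqP W i) => hWi hpd; first by
    (have -> : i = W by lia); move: p2R hWR; lia.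
  have hWi0 : (0 < W - i)%N by lia.
  have := dvdn_leq hWi0 hpd; move: hWR; lia.
- by case: (ltnP W i) => h; apply/eqP; lia.
- split => //; case: (ltnP W i) => h; last by rewrite addnA dvdn_addl ?dvdnn.
  move: hpd; rewrite /dist; case: (leqP W i) => hWi hpd; last by lia.
  have hWi0 : (0 < i - W)%N by lia.
  have hle := dvdn_leq hWi0 hpd.
  have -> : (c + (i - p) = (c + i) - p)%N by lia.
  exact: dvdn_sub.
Qed.


Lemma main_nat (M : seq nat) : uniq M -> (forall q, q \in M -> prime q /\ odd q) ->
  exists nM : nat, forall N : nat, nM <= N -> exists c : nat, forall i, i < N ->
  exists p j, [/\ prime p, p \notin M, j < N, j != i & p %| c + i /\ p %| c + j].
Proof.
move=> hM_uniq hM_odd_prime.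
have [N0 hN0] := many_primes (size M).
exists (N0 + 4 * sumn M + 8)%N => N hN.
set W := Wd N.
set C := C0 M N.
set T := Tl M N.
set F := [seq p <- iota (N %/ 4).+1 (N %/ 4) | prime p].
have hTF : (size T <= size F)%N.
  apply: leq_trans (size_Tl N hM_uniq hM_odd_prime) _.
  rewrite size_filter; apply: hN0; lia.
set F' := take (size T) F.
have hF' : size F' = size T by rewrite size_takel.
have memF : forall x, x \in F -> prime x /\ ((N %/ 4).+1 <= x)%N.
  by move=> x; rewrite mem_filter mem_iota => /andP[-> /andP[-> _]].
have memC : forall x, x \in C -> [/\ prime x, odd x & (x.*2 <= Rd N)%N].
  by move=> x; rewrite mem_filter => /andP[/and4P[-> -> _ ->] _].
set L := (2, W.+1) :: [seq (p, p - W %% p) | p <- C] ++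
         [seq (x.1, x.1 - x.2 %% x.1) | x <- zip F' T].
have uL : unzip1 L = 2 :: C ++ F'.
  rewrite /L /unzip1 /= map_cat -!map_comp /=.
  congr (_ :: _ ++ _).
    by rewrite (@eq_map _ _ _ id) ?map_id.
  rewrite -[RHS](@unzip1_zip _ _ F' T); last by rewrite hF'.
  by apply: eq_map.
have hRN : (Rd N <= (N %/ 4).*2.+1)%N by rewrite /Rd /Wd; lia.
have [c hc] : exists c, forall q, q \in L -> c %% q.1 = q.2 %% q.1.
  apply: crt; rewrite uL.
    rewrite /= mem_cat negb_or cat_uniq.
    rewrite -!andbA; apply/and5P; split.
    - by apply/negP => /memC [_].
    - by apply/negP => /mem_take /memF [_]; lia.
    - by apply: filter_uniq; exact: iota_uniq.
    - apply/hasPn => x /mem_take /memF [_ h1]; apply/negP => /memC [_ _ h2].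
      lia.
    - by apply: take_uniq; apply: filter_uniq; exact: iota_uniq.
  rewrite /= all_cat.
  apply/andP; split; apply/allP => x.
    by move/memC => [].
  by move/mem_take/memF => [].
have hc2 : (c %% 2 = W.+1 %% 2)%N by apply: (hc (2, W.+1)); rewrite inE eqxx.
have hcC : forall p, p \in C -> (p %| c + W)%N.
  move=> p pC; apply: mod_dvd; first by case: (memC p pC) => /prime_gt0.
  apply: (hc (p, p - W %% p)); rewrite inE mem_cat; apply/orP; right.
  by apply/orP; left; apply/mapP; exists p.
have hcT : forall j, (j < size T)%N -> (nth 0 F j %| c + nth 0 T j)%N.
  move=> j hj.
  have hjF : (j < size F)%N by exact: leq_trans hj hTF.
  have pj : 0 < nth 0 F j by case: (memF _ (mem_nth 0 hjF)) => /prime_gt0.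
  have e : nth 0 F j = nth 0 F' j by rewrite nth_take.
  rewrite e in pj *.
  apply: mod_dvd => //.
  set x := (nth 0 F' j, nth 0 T j).
  have xz : x \in zip F' T.
    by rewrite /x -nth_zip // mem_nth // size_zip hF' minnn.
  apply: (hc (x.1, x.1 - x.2 %% x.1)); rewrite inE mem_cat; apply/orP; right.
  by apply/orP; right; apply/mapP; exists x.
exists c => i hi.
have h8 : 8 + 4 * sumn M <= N by lia.
exact: (@cover_pos M N c h8 hM_odd_prime hTF hc2 hcC hcT i hi).
Qed.

Local Open Scope ring_scope.

Theorem theorem2p1 (M : seq nat)
  (hM_uniq : uniq M) (hk : (0 < size M)%N)
  (hM_odd_prime : forall q, q \in M -> prime q /\ odd q) :
  exists nM : nat, forall N : nat, (nM <= N)%N ->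
    exists a : int, forall i : nat, (i < N)%N ->
      gcdz (a + i%:Z) (prod_others a N i) != 1 /\
      exists p : nat, [/\ prime p, p \notin M &
        (p%:Z %| gcdz (a + i%:Z) (prod_others a N i))%Z].
Proof.
have [nM hnM] := @main_nat M hM_uniq hM_odd_prime.
exists nM => N hN.
have [c hc] := hnM N hN.
exists c%:Z => i hi.
have [p [j [pp pM hj hji [hpi hpj]]]] := hc i hi.
have dz : forall k, (p %| c + k)%N -> (p%:Z %| c%:Z + k%:Z)%Z.
  by move=> k hk'; rewrite -PoszD dvdzE.
have hg : (p%:Z %| gcdz (c%:Z + i%:Z) (prod_others c%:Z N i))%Z.
  rewrite dvdz_gcd dz //=.
  rewrite /prod_others (bigD1 (Ordinal hj)) //=.
  by apply: dvdz_mulr; exact: dz.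
split; last by exists p.
apply/negP => /eqP h; rewrite h dvdz1 /= in hg.
by move: (prime_gt1 pp); rewrite (eqP hg).
Qed.
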